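(* Let $G$ be a NOI-graph or a COI-graph on $n$ vertices. Then to each connected component $C_k$ of $G$ (isolated vertices included) corresponds a vector $\mathbf{v}_k\in\{-1,0,1\}^n$, supported on the vertex set of $C_k$, such that the vectors $\{\mathbf{v}_k\}$ form a basis of the kernel of the hybrid Laplacian $\mathcal{L}(G)$.
   Context: A hybrid graph $G=(V,E_L+E_Q)$ has a set $E_L$ of $L$-edges and a set $E_Q$ of $Q$-edges. Its hybrid Laplacian is $\mathcal{L}(G)=L(S_l)+Q(S_q)$ with $S_l=(V,E_L)$, $S_q=(V,E_Q)$, $L=D-A$ the signed Laplacian and $Q=D+A$ the signless Laplacian. Connected components are taken in the graph with all edges of both types. $G$ is a NOI-graph if $S_q$ is bipartite and no vertex is incident to both a $Q$-edge and an $L$-edge. $G$ is a COI-graph if $S_q$ is bipartite with a bipartition $(P_1,P_2)$ of $V$ (every $Q$-edge joining $P_1$ to $P_2$) such that every $L$-edge joins two vertices in the same part. *)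

(* Defs.v *)
From HB Require Import structures.
From mathcomp Require Import all_boot all_order all_algebra.
Set Implicit Arguments. Unset Strict Implicit. Unset Printing Implicit Defensive.
Import Order.TTheory GRing.Theory Num.Theory.
Local Open Scope ring_scope.

Definition simple_rel (n : nat) (e : rel 'I_n) : Prop :=
  (forall x y, e x y = e y x) /\ (forall x, ~~ e x x).

Definition deg (n : nat) (e : rel 'I_n) (i : 'I_n) : nat := #|[set j | e i j]|.

(* Hybrid Laplacian L(S_l) + Q(S_q):
   diagonal = deg_L + deg_Q, off-diagonal = [Q-edge] - [L-edge]. *)
Definition hybrid_laplacian (R : nzRingType) (n : nat) (eL eQ : rel 'I_n) : 'M[R]_n :=
  \matrix_(i, j)
    if i == j then ((deg eL i)%:R + (deg eQ i)%:R)
    else ((eQ i j)%:R - (eL i j)%:R).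

Definition hyb_adj (n : nat) (eL eQ : rel 'I_n) : rel 'I_n :=
  fun x y => eL x y || eQ x y.

Definition components (n : nat) (eL eQ : rel 'I_n) : {set {set 'I_n}} :=
  [set [set y | connect (hyb_adj eL eQ) x y] | x : 'I_n].

Definition bipartite_by (n : nat) (e : rel 'I_n) (part : 'I_n -> bool) : Prop :=
  forall x y, e x y -> part x != part y.

Definition NOI_graph (n : nat) (eL eQ : rel 'I_n) : Prop :=
  (exists part, bipartite_by eQ part) /\
  (forall x : 'I_n, ~ ((exists y, eL x y) /\ (exists y, eQ x y))).

Definition COI_graph (n : nat) (eL eQ : rel 'I_n) : Prop :=
  exists part : 'I_n -> bool,
    bipartite_by eQ part /\ (forall x y, eL x y -> part x = part y).

Definition is_kernel_basis (R : fieldType) (n : nat) (M : 'M[R]_n)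
    (I : {set {set 'I_n}}) (v : {set 'I_n} -> 'cV[R]_n) : Prop :=
  [/\ forall C, C \in I -> M *m v C = 0,
      (forall c : {set 'I_n} -> R,
          \sum_(C in I) c C *: v C = 0 -> forall C, C \in I -> c C = 0) &
      (forall u : 'cV[R]_n, M *m u = 0 ->
          exists c : {set 'I_n} -> R, u = \sum_(C in I) c C *: v C)].

(* Main.v *)
Require Import Defs.
From HB Require Import structures.
From mathcomp Require Import all_boot all_order all_algebra.
From mathcomp Require Import ring.
Import Order.TTheory GRing.Theory Num.Theory.
Local Open Scope ring_scope.

Lemma deg_sum (R : nzRingType) (n : nat) (e : rel 'I_n) (i : 'I_n) :
  (deg e i)%:R = \sum_j (e i j)%:R :> R.
Proof.
rewrite /deg -sum1_card natr_sum big_mkcond /=; apply: eq_bigr => j _.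
by rewrite inE; case: (e i j).
Qed.

Lemma hl_row (R : realFieldType) (n : nat) (eL eQ : rel 'I_n) (u : 'cV[R]_n) i :
  simple_rel eL -> simple_rel eQ ->
  (hybrid_laplacian R eL eQ *m u) i 0 =
  \sum_j ((eL i j)%:R * (u i 0 - u j 0) + (eQ i j)%:R * (u i 0 + u j 0)).
Proof.
move=> [sL iL] [sQ iQ]; rewrite mxE.
have -> : \sum_j hybrid_laplacian R eL eQ i j * u j 0 =
  \sum_j ((i == j)%:R * (((deg eL i)%:R + (deg eQ i)%:R) * u j 0)
          + ((eQ i j)%:R - (eL i j)%:R) * u j 0).
  apply: eq_bigr => j _; rewrite mxE; case: eqP => [<-|_].
    by rewrite (negbTE (iL i)) (negbTE (iQ i)) subrr mul0r addr0 mul1r.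
  by rewrite mul0r add0r.
rewrite big_split /= (bigD1 i) //= eqxx mul1r big1 ?addr0; last first.
  by move=> j /negbTE; rewrite eq_sym => ->; rewrite mul0r.
rewrite !deg_sum.
have -> : \sum_j ((eL i j)%:R * (u i 0 - u j 0) + (eQ i j)%:R * (u i 0 + u j 0))
  = \sum_j (((eL i j)%:R + (eQ i j)%:R) * u i 0) + \sum_j (((eQ i j)%:R - (eL i j)%:R) * u j 0) :> R.
  by rewrite -big_split /=; apply: eq_bigr => j _; ring.
by rewrite -mulr_suml big_split.
Qed.

Lemma kernel_of_edges (R : realFieldType) (n : nat) (eL eQ : rel 'I_n) (u : 'cV[R]_n) :
  simple_rel eL -> simple_rel eQ ->
  (forall i j, eL i j -> u i 0 = u j 0) -> (forall i j, eQ i j -> u i 0 = - u j 0) ->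
  hybrid_laplacian R eL eQ *m u = 0.
Proof.
move=> hL hQ HL HQ; apply/matrixP => i k; rewrite ord1 hl_row // mxE big1 // => j _.
case eij: (eL i j); case qij: (eQ i j);
  rewrite ?mul0r ?mul1r ?add0r ?addr0. 
  all: try (rewrite (HL i j) // subrr //). all: try (rewrite (HQ i j) // addNr //).
  all: try done.
have h1 := HL i j eij; have h2 := HQ i j qij; rewrite h1 in h2.
by rewrite add0r {1}h2 addNr.

Qed.

Lemma edges_of_kernel (R : realFieldType) (n : nat) (eL eQ : rel 'I_n) (u : 'cV[R]_n) :
  simple_rel eL -> simple_rel eQ ->
  hybrid_laplacian R eL eQ *m u = 0 ->
  (forall i j, eL i j -> u i 0 = u j 0) /\ (forall i j, eQ i j -> u i 0 = - u j 0).
Proof.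
move=> hL hQ Hu.
pose a i j : R := (eL i j)%:R. pose b i j : R := (eQ i j)%:R.
pose G i j := a i j * (u i 0 ^+ 2 - u i 0 * u j 0) + b i j * (u i 0 ^+ 2 + u i 0 * u j 0).
pose F i j := a i j * (u i 0 - u j 0) ^+ 2 + b i j * (u i 0 + u j 0) ^+ 2.
have G0 : \sum_i \sum_j G i j = 0.
  transitivity (\sum_i u i 0 * (hybrid_laplacian R eL eQ *m u) i 0).
    apply: eq_bigr => i _; rewrite hl_row // mulr_sumr; apply: eq_bigr => j _.
    rewrite /G /a /b; ring.
  by rewrite big1 // => i _; rewrite Hu mxE mulr0.
have symL i j : a i j = a j i by rewrite /a hL.1.
have symQ i j : b i j = b j i by rewrite /b hQ.1.
have F0 : \sum_i \sum_j F i j = 0.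
  have -> : \sum_i \sum_j F i j = \sum_i \sum_j G i j + \sum_i \sum_j G j i.
    rewrite -big_split; apply: eq_bigr => i _; rewrite -big_split; apply: eq_bigr => j _.
    rewrite /F /G symL symQ /a /b; rewrite /=; ring.
  by rewrite [X in _ + X]exchange_big /= G0 addr0.
have a0 i j : 0 <= a i j by rewrite /a ler0n.
have b0 i j : 0 <= b i j by rewrite /b ler0n.
have Fge i j : 0 <= F i j by rewrite /F addr_ge0 // mulr_ge0 // sqr_ge0.
have Fz i j : F i j = 0.
  move/eqP: F0; rewrite psumr_eq0; last by move=> k _; rewrite sumr_ge0.
  move/allP/(_ i (mem_index_enum _)) => /=; rewrite psumr_eq0 //.
  by move/allP/(_ j (mem_index_enum _)) => /eqP.
split=> [i j e|i j e].
  move: (Fz i j); rewrite /F.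
  rewrite {1}/a e mul1r => /eqP.
  rewrite paddr_eq0 ?(sqr_ge0 _) ?(mulr_ge0 (b0 i j) (sqr_ge0 _)) //.
  by case/andP; rewrite sqrf_eq0 subr_eq0 => /eqP.
move: (Fz i j); rewrite /F.
rewrite {1}/b e mul1r => /eqP.
rewrite paddr_eq0 ?(sqr_ge0 _) ?(mulr_ge0 (a0 i j) (sqr_ge0 _)) //.
by case/andP => _; rewrite sqrf_eq0 addr_eq0 => /eqP.
Qed.

Lemma exists_sg (n : nat) (eL eQ : rel 'I_n) :
  simple_rel eL -> simple_rel eQ ->
  NOI_graph eL eQ \/ COI_graph eL eQ ->
  exists sg : 'I_n -> bool,
    (forall x y, eL x y -> sg x = sg y) /\ (forall x y, eQ x y -> sg x != sg y).
Proof.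
move=> [sL _] [sQ _] [[[part bp] noi]|[part [bp cL]]]; last by exists part.
exists (fun x => if [exists y, eQ x y] then part x else true); split.
  move=> x y exy.
  have nx : ~~ [exists z, eQ x z].
    apply/negP => /existsP [z hz]; apply: (noi x); split; by [exists y | exists z].
  have ny : ~~ [exists z, eQ y z].
    apply/negP => /existsP [z hz]; apply: (noi y); split; [exists x; by rewrite sL | by exists z].
  by rewrite (negbTE nx) (negbTE ny).
move=> x y exy.
have -> : [exists z, eQ x z] by apply/existsP; exists y.
have -> : [exists z, eQ y z] by apply/existsP; exists x; rewrite sQ.
exact: bp.
Qed.

Lemma f_connect (R : Type) (n : nat) (e : rel 'I_n) (f : 'I_n -> R) :
  (forall x y, e x y -> f x = f y) -> forall x y, connect e x y -> f x = f y.
Proof.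
move=> fe x y /connectP [p pth ->]; elim: p x pth => //= a p IH x /andP [exa pa].
by rewrite (fe _ _ exa) IH.
Qed.

Lemma hyb_sym (n : nat) (eL eQ : rel 'I_n) :
  simple_rel eL -> simple_rel eQ -> connect_sym (hyb_adj eL eQ).
Proof.
move=> [sL _] [sQ _]; apply: sym_connect_sym => x y.
by rewrite /hyb_adj sL sQ.
Qed.

Lemma comp_eq (n : nat) (eL eQ : rel 'I_n) C i :
  simple_rel eL -> simple_rel eQ ->
  C \in components eL eQ -> i \in C -> C = [set y | connect (hyb_adj eL eQ) i y].
Proof.
move=> hL hQ /imsetP [x _ ->]; rewrite inE => cxi.
apply/setP => y; rewrite !inE; apply/idP/idP => h.
  by apply: connect_trans h; rewrite hyb_sym.
exact: connect_trans cxi h.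
Qed.

Lemma comp_closed (n : nat) (eL eQ : rel 'I_n) C i j :
  simple_rel eL -> simple_rel eQ ->
  C \in components eL eQ -> hyb_adj eL eQ i j -> (i \in C) = (j \in C).
Proof.
move=> hL hQ /imsetP [x _ ->] e; rewrite !inE; apply/idP/idP => h.
  exact: connect_trans h (connect1 e).
apply: connect_trans h _; rewrite hyb_sym //; exact: connect1.
Qed.

Arguments comp_eq {n eL eQ C i}.
Arguments comp_closed {n eL eQ C i j}.
Arguments edges_of_kernel {R n eL eQ u}.
Arguments exists_sg {n eL eQ}.

Theorem lemmaD1 (R : realFieldType) (n : nat) (eL eQ : rel 'I_n) :
  simple_rel eL -> simple_rel eQ ->
  NOI_graph eL eQ \/ COI_graph eL eQ ->
  exists v : {set 'I_n} -> 'cV[R]_n,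
    [/\ forall C, C \in components eL eQ ->
          forall i, v C i 0 \in [:: -1; 0; 1],
        forall C, C \in components eL eQ ->
          forall i, v C i 0 != 0 -> i \in C &
        is_kernel_basis (hybrid_laplacian R eL eQ) (components eL eQ) v].
Proof.
move=> hL hQ hG; have [sg [sgL sgQ]] := exists_sg hL hQ hG.
pose s i : R := if sg i then 1 else -1.
have sL x y : eL x y -> s x = s y by move=> e; rewrite /s (sgL _ _ e).
have sQ x y : eQ x y -> s x = - s y.
  by move=> e; move: (sgQ _ _ e); rewrite /s; case: (sg x); case: (sg y); rewrite ?opprK.
have ss i : s i * s i = 1 by rewrite /s; case: (sg i); rewrite ?mulr1 ?mulrNN ?mulr1.
have s0 i : s i != 0 by apply/negP => /eqP h; move: (ss i); rewrite h mul0r => /eqP; rewrite eq_sym oner_eq0.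
pose v (C : {set 'I_n}) : 'cV[R]_n := \col_i (if i \in C then s i else 0).
have adjL x y : eL x y -> hyb_adj eL eQ x y by move=> e; rewrite /hyb_adj e.
have adjQ x y : eQ x y -> hyb_adj eL eQ x y by move=> e; rewrite /hyb_adj e orbT.
exists v; split.
- move=> C _ i; rewrite mxE /s; case: (i \in C); case: (sg i); by rewrite !inE eqxx ?orbT.
- by move=> C _ i; rewrite mxE; case: ifP => //; rewrite eqxx.
split.
- move=> C hC; apply: kernel_of_edges => //.
    move=> i j e; rewrite !mxE (comp_closed hL hQ hC (adjL _ _ e)).
    by rewrite (sL _ _ e).
  move=> i j e; rewrite !mxE (comp_closed hL hQ hC (adjQ _ _ e)); case: ifP => _; by rewrite ?(sQ _ _ e) ?oppr0.
- move=> c hc C hC.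
  have [x _ Cx] : exists2 x, true & C = [set y | connect (hyb_adj eL eQ) x y].
    by case/imsetP: hC => x _ ->; exists x.
  have xC : x \in C by rewrite Cx inE connect0.
  move: (congr1 (fun M : 'cV[R]_n => M x 0) hc); rewrite summxE (bigD1 C) //= big1.
    rewrite mxE mxE xC addr0 => /eqP; rewrite mxE mulf_eq0 (negbTE (s0 x)) orbF => /eqP -> //.
  move=> C' /andP [hC' nC]; rewrite !mxE; case: ifP => xC'; last by rewrite mulr0.
  by move: nC; rewrite (comp_eq hL hQ hC' xC') -Cx eqxx.
- move=> u Hu; have [uL uQ] := edges_of_kernel hL hQ Hu.
  exists (fun C : {set 'I_n} => if [pick x in C] is Some x then u x 0 * s x else 0).
  apply/matrixP => i k; rewrite ord1 summxE.
  pose C0 := [set y | connect (hyb_adj eL eQ) i y].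
  have hC0 : C0 \in components eL eQ by apply: imset_f.
  have iC0 : i \in C0 by rewrite inE connect0.
  rewrite (bigD1 C0) //= big1.
    rewrite !mxE iC0 addr0; case: pickP => [x xC0|]; last by move/(_ i); rewrite iC0.
    have -> : u x 0 * s x = u i 0 * s i.
      symmetry; apply: (@f_connect R n (hyb_adj eL eQ) (fun y => u y 0 * s y)); last by move: xC0; rewrite inE.
      move=> y z /orP [e|e]; first by rewrite (uL _ _ e) (sL _ _ e).
      by rewrite (uQ _ _ e) (sQ _ _ e) mulrNN.
    by rewrite -mulrA ss mulr1.
  move=> C' /andP [hC' nC]; rewrite !mxE; case: ifP => xC'; last by rewrite mulr0.
  by move: nC; rewrite (comp_eq hL hQ hC' xC') eqxx.
Qed.
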